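(* If a triangulated category $\mathcal{C}$ admits a morphism-faithful prime rank function, then $\mathcal{C}$ is simple.
   Context: A rank function on $\mathcal{C}$ assigns to each morphism $f$ a real $\rho(f)\geq0$ with $\rho(\Sigma f)=\rho(f)$, $\rho(f\oplus g)=\rho(f)+\rho(g)$, and $\rho(f)+\rho(g)=\rho(\mathrm{id}_Y)$ for every exact triangle $X\xrightarrow{f}Y\xrightarrow{g}Z\rightsquigarrow$. It is morphism-faithful if $\rho(f)\neq0$ for every nonzero morphism $f$; prime if its values are integers and $\mathcal{C}$ has a generator $X$ (an object whose smallest thick subcategory containing it is $\mathcal{C}$) with $\rho(\mathrm{id}_X)=1$. A triangulated category is simple if every exact triangle is split (isomorphic to a direct sum of triangles each having an isomorphism as one of its arrows) and it is generated as a triangulated category by one nonzero indecomposable object. *)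

(* Defs.v *)
From HB Require Import structures.
From mathcomp Require Import all_boot all_order all_algebra.
From mathcomp Require Import Rstruct.
Set Implicit Arguments. Unset Strict Implicit. Unset Printing Implicit Defensive.
Import GRing.Theory Num.Theory.
Local Open Scope ring_scope.

Record PreAddCat := {
  Obj : Type;
  Hom : Obj -> Obj -> zmodType;
  idm : forall X : Obj, Hom X X;
  comp : forall X Y Z : Obj, Hom Y Z -> Hom X Y -> Hom X Z;
  comp_assoc : forall X Y Z W (h : Hom Z W) (g : Hom Y Z) (f : Hom X Y),
      comp (comp h g) f = comp h (comp g f);
  comp_id_l : forall X Y (f : Hom X Y), comp (idm Y) f = f;
  comp_id_r : forall X Y (f : Hom X Y), comp f (idm X) = f;
  comp_add_l : forall X Y Z (g1 g2 : Hom Y Z) (f : Hom X Y),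
      comp (g1 + g2) f = comp g1 f + comp g2 f;
  comp_add_r : forall X Y Z (g : Hom Y Z) (f1 f2 : Hom X Y),
      comp g (f1 + f2) = comp g f1 + comp g f2
}.
Arguments idm {p} X.
Arguments comp {p X Y Z}.

Section PreAdd.
Variable C : PreAddCat.
Definition is_iso (X Y : Obj C) (f : Hom X Y) : Prop :=
  exists g : Hom Y X, comp g f = idm X /\ comp f g = idm Y.
Definition is_zero (X : Obj C) : Prop := idm X = 0.
End PreAdd.

Record AddCat := {
  pac :> PreAddCat;
  zo : Obj pac;
  zo_zero : is_zero zo;
  bs : Obj pac -> Obj pac -> Obj pac;
  bin1 : forall X Y, Hom X (bs X Y);
  bin2 : forall X Y, Hom Y (bs X Y);
  bp1 : forall X Y, Hom (bs X Y) X;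
  bp2 : forall X Y, Hom (bs X Y) Y;
  bp1_in1 : forall X Y, comp (bp1 X Y) (bin1 X Y) = idm X;
  bp2_in2 : forall X Y, comp (bp2 X Y) (bin2 X Y) = idm Y;
  bp1_in2 : forall X Y, comp (bp1 X Y) (bin2 X Y) = 0;
  bp2_in1 : forall X Y, comp (bp2 X Y) (bin1 X Y) = 0;
  bs_id : forall X Y,
      comp (bin1 X Y) (bp1 X Y) + comp (bin2 X Y) (bp2 X Y) = idm (bs X Y)
}.
Arguments zo {a}.
Arguments bs {a}.
Arguments bin1 {a X Y}.
Arguments bin2 {a X Y}.
Arguments bp1 {a X Y}.
Arguments bp2 {a X Y}.

Definition msum (C : AddCat) (X1 X2 Y1 Y2 : Obj C)
    (f : Hom X1 Y1) (g : Hom X2 Y2) : Hom (bs X1 X2) (bs Y1 Y2) :=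
  comp bin1 (comp f bp1) + comp bin2 (comp g bp2).

Record SuspCat := {
  ac :> AddCat;
  Sob : Obj ac -> Obj ac;
  Smor : forall X Y : Obj ac, Hom X Y -> Hom (Sob X) (Sob Y);
  Smor_id : forall X, Smor (idm X) = idm (Sob X);
  Smor_comp : forall X Y Z (g : Hom Y Z) (f : Hom X Y),
      Smor (comp g f) = comp (Smor g) (Smor f);
  Smor_add : forall X Y (f g : Hom X Y), Smor (f + g) = Smor f + Smor g;
  Smor_bij : forall X Y, bijective (@Smor X Y);
  Sob_ess : forall Y, exists X (f : Hom (Sob X) Y), is_iso f
}.
Arguments Sob {s}.
Arguments Smor {s X Y}.

Section Triangles.
Variable C : SuspCat.

Record triangle := Tri {
  tX : Obj C; tY : Obj C; tZ : Obj C;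
  tf : Hom tX tY; tg : Hom tY tZ; th : Hom tZ (Sob tX) }.

Definition tri_morph (T T' : triangle) (a : Hom (tX T) (tX T'))
    (b : Hom (tY T) (tY T')) (c : Hom (tZ T) (tZ T')) : Prop :=
  [/\ comp b (tf T) = comp (tf T') a,
      comp c (tg T) = comp (tg T') b &
      comp (Smor a) (th T) = comp (th T') c].

Definition tri_iso (T T' : triangle) : Prop :=
  exists (a : Hom (tX T) (tX T')) (b : Hom (tY T) (tY T')) (c : Hom (tZ T) (tZ T')),
    [/\ tri_morph a b c, is_iso a, is_iso b & is_iso c].

Definition rotate (T : triangle) : triangle :=
  @Tri (tY T) (tZ T) (Sob (tX T)) (tg T) (th T) (- Smor (tf T)).

Definition tsum (T1 T2 : triangle) : triangle :=
  @Tri (bs (tX T1) (tX T2)) (bs (tY T1) (tY T2)) (bs (tZ T1) (tZ T2))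
    (msum (tf T1) (tf T2)) (msum (tg T1) (tg T2))
    (comp (Smor bin1) (comp (th T1) bp1) + comp (Smor bin2) (comp (th T2) bp2)).

Fixpoint tsum_list (T0 : triangle) (Ts : seq triangle) : triangle :=
  match Ts with
  | [::] => T0
  | T1 :: Ts' => tsum T0 (tsum_list T1 Ts')
  end.

Definition has_iso_arrow (T : triangle) : Prop :=
  is_iso (tf T) \/ is_iso (tg T) \/ is_iso (th T).

End Triangles.

Record TriCat := {
  sc :> SuspCat;
  dist : triangle sc -> Prop;
  TR1_iso : forall T T', tri_iso T T' -> dist T -> dist T';
  TR1_id : forall X : Obj sc, dist (@Tri sc X X zo (idm X) 0 0);
  TR1_ext : forall (X Y : Obj sc) (f : Hom X Y),
      exists Z (g : Hom Y Z) (h : Hom Z (Sob X)), dist (Tri f g h);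
  TR2 : forall T, dist T <-> dist (rotate T);
  TR3 : forall T T' (a : Hom (tX T) (tX T')) (b : Hom (tY T) (tY T')),
      dist T -> dist T' -> comp b (tf T) = comp (tf T') a ->
      exists c, tri_morph a b c;
  TR4 : forall (X Y Z Z' X' Y' : Obj sc) (f : Hom X Y) (g : Hom Y Z)
      (j : Hom Y Z') (k : Hom Z' (Sob X))
      (l : Hom Z X') (i : Hom X' (Sob Y))
      (m : Hom Z Y') (n : Hom Y' (Sob X)),
      dist (Tri f j k) -> dist (Tri g l i) -> dist (Tri (comp g f) m n) ->
      exists (u : Hom Z' Y') (v : Hom Y' X'),
        [/\ comp u j = comp m g, comp n u = k, comp v m = l,
            comp i v = comp (Smor f) n &
            dist (Tri u v (comp (Smor j) i))]
}.

Section TriDefs.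
Variable C : TriCat.

Definition tri_subcat (P : Obj C -> Prop) : Prop :=
  [/\ P zo,
      (forall (X Y : Obj C) (f : Hom X Y), is_iso f -> P X -> P Y),
      (forall X : Obj C, P X <-> P (Sob X)) &
      (forall T : triangle C, dist T -> P (tX T) -> P (tY T) -> P (tZ T))].

Definition thick_subcat (P : Obj C -> Prop) : Prop :=
  tri_subcat P /\ (forall X Y : Obj C, P (bs X Y) -> P X).

Definition thick_generator (X : Obj C) : Prop :=
  forall P, thick_subcat P -> P X -> forall Y, P Y.

Definition tri_generator (X : Obj C) : Prop :=
  forall P, tri_subcat P -> P X -> forall Y, P Y.

Definition indecomposable (X : Obj C) : Prop :=
  ~ is_zero X /\
  forall (A B : Obj C) (f : Hom X (bs A B)), is_iso f -> is_zero A \/ is_zero B.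

Definition split_triangle (T : triangle C) : Prop :=
  exists (T0 : triangle C) (Ts : seq (triangle C)),
    [/\ tri_iso T (tsum_list T0 Ts), has_iso_arrow T0 &
        List.Forall (@has_iso_arrow C) Ts].

Definition simple_tricat : Prop :=
  (forall T : triangle C, dist T -> split_triangle T) /\
  exists X : Obj C, ~ is_zero X /\ indecomposable X /\ tri_generator X.

Definition rank_function (rho : forall X Y : Obj C, Hom X Y -> Rdefinitions.R) : Prop :=
  [/\ (forall X Y (f : Hom X Y), 0 <= rho _ _ f),
      (forall X Y (f : Hom X Y), rho _ _ (Smor f) = rho _ _ f),
      (forall X1 X2 Y1 Y2 (f : Hom X1 Y1) (g : Hom X2 Y2),
          rho _ _ (msum f g) = rho _ _ f + rho _ _ g) &
      (forall T : triangle C, dist T ->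
          rho _ _ (tf T) + rho _ _ (tg T) = rho _ _ (idm (tY T)))].

Definition morphism_faithful (rho : forall X Y : Obj C, Hom X Y -> Rdefinitions.R) : Prop :=
  forall X Y (f : Hom X Y), f != 0 -> rho _ _ f != 0.

Definition prime_rank (rho : forall X Y : Obj C, Hom X Y -> Rdefinitions.R) : Prop :=
  (forall X Y (f : Hom X Y), exists z : int, rho _ _ f = z%:~R) /\
  exists X : Obj C, thick_generator X /\ rho _ _ (idm X) = 1.

End TriDefs.

(* Main.v *)
Require Import Defs.
From mathcomp Require Import all_boot all_order all_algebra.
From mathcomp Require Import Rstruct zify lra.
From Stdlib Require Import Classical.
Set Implicit Arguments. Unset Strict Implicit.
Import GRing.Theory Num.Theory.
Local Open Scope ring_scope.

Local Notation "g ⊚ f" := (Defs.comp g f) (at level 40, left associativity).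

Section PA.
Variable C : PreAddCat.

Lemma comp0l (X Y Z : Obj C) (f : Defs.Hom X Y) : (0 : Defs.Hom Y Z) ⊚ f = 0.
Proof.
have H := comp_add_l (0 : Defs.Hom Y Z) 0 f. rewrite addr0 in H.
by apply: (addrI ((0 : Defs.Hom Y Z) ⊚ f)); rewrite -H addr0.
Qed.

Lemma comp0r (X Y Z : Obj C) (g : Defs.Hom Y Z) : g ⊚ (0 : Defs.Hom X Y) = 0.
Proof.
have H := comp_add_r g (0 : Defs.Hom X Y) 0. rewrite addr0 in H.
by apply: (addrI (g ⊚ (0 : Defs.Hom X Y))); rewrite -H addr0.
Qed.

Lemma compNl (X Y Z : Obj C) (g : Defs.Hom Y Z) (f : Defs.Hom X Y) : (- g) ⊚ f = - (g ⊚ f).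
Proof. by apply/eqP; rewrite -addr_eq0 -comp_add_l addNr comp0l. Qed.

Lemma compNr (X Y Z : Obj C) (g : Defs.Hom Y Z) (f : Defs.Hom X Y) : g ⊚ (- f) = - (g ⊚ f).
Proof. by apply/eqP; rewrite -addr_eq0 -comp_add_r addNr comp0r. Qed.

Lemma compBl (X Y Z : Obj C) (g1 g2 : Defs.Hom Y Z) (f : Defs.Hom X Y) : (g1 - g2) ⊚ f = g1 ⊚ f - g2 ⊚ f.
Proof. by rewrite comp_add_l compNl. Qed.

Lemma compBr (X Y Z : Obj C) (g : Defs.Hom Y Z) (f1 f2 : Defs.Hom X Y) : g ⊚ (f1 - f2) = g ⊚ f1 - g ⊚ f2.
Proof. by rewrite comp_add_r compNr. Qed.

Lemma compA' (X Y Z W : Obj C) (h : Defs.Hom Z W) (g : Defs.Hom Y Z) (f : Defs.Hom X Y) :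
  h ⊚ (g ⊚ f) = h ⊚ g ⊚ f.
Proof. by rewrite comp_assoc. Qed.

Lemma zero_from (X Y : Obj C) (f : Defs.Hom X Y) : is_zero X -> f = 0.
Proof. by move=> HX; rewrite -(comp_id_r f) HX comp0r. Qed.

Lemma zero_to (X Y : Obj C) (f : Defs.Hom X Y) : is_zero Y -> f = 0.
Proof. by move=> HY; rewrite -(comp_id_l f) HY comp0l. Qed.

Lemma iso_zero (X Y : Obj C) (f : Defs.Hom X Y) : is_zero X -> is_zero Y -> is_iso f.
Proof. move=> HX HY; exists 0; split; [by rewrite comp0l HX | by rewrite comp0r HY]. Qed.

Lemma iso_id (X : Obj C) : is_iso (idm X).
Proof. exists (idm X); split; exact: comp_id_l. Qed.

Lemma iso_comp (X Y Z : Obj C) (g : Defs.Hom Y Z) (f : Defs.Hom X Y) :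
  is_iso g -> is_iso f -> is_iso (g ⊚ f).
Proof.
move=> [g' [H1 H2]] [f' [H3 H4]]; exists (f' ⊚ g'); split.
  by rewrite comp_assoc -(comp_assoc g') H1 comp_id_l H3.
by rewrite comp_assoc -(comp_assoc f) H4 comp_id_l H2.
Qed.

Lemma iso_sym (X Y : Obj C) (f : Defs.Hom X Y) (g : Defs.Hom Y X) :
  g ⊚ f = idm X -> f ⊚ g = idm Y -> is_iso g.
Proof. by move=> H1 H2; exists f; split. Qed.

Lemma iso_zero_obj (X Y : Obj C) (f : Defs.Hom X Y) : is_iso f -> is_zero X -> is_zero Y.
Proof.
move=> [g [H1 H2]] HX; rewrite /is_zero -H2.
by rewrite (zero_from f HX) comp0l.
Qed.

Lemma iso_zero_obj' (X Y : Obj C) (f : Defs.Hom X Y) : is_iso f -> is_zero Y -> is_zero X.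
Proof.
move=> [g [H1 H2]] HY; rewrite /is_zero -H1.
by rewrite (zero_from g HY) comp0l.
Qed.

Lemma ext_out (B Z A1 A2 : Obj C) (i1 : Defs.Hom A1 B) (i2 : Defs.Hom A2 B)
  (p1 : Defs.Hom B A1) (p2 : Defs.Hom B A2) (F G : Defs.Hom B Z) :
  i1 ⊚ p1 + i2 ⊚ p2 = idm B -> F ⊚ i1 = G ⊚ i1 -> F ⊚ i2 = G ⊚ i2 -> F = G.
Proof.
move=> H H1 H2; rewrite -(comp_id_r F) -(comp_id_r G) -H !comp_add_r.
by rewrite !compA' H1 H2.
Qed.

Lemma ext_in (B Z A1 A2 : Obj C) (i1 : Defs.Hom A1 B) (i2 : Defs.Hom A2 B)
  (p1 : Defs.Hom B A1) (p2 : Defs.Hom B A2) (F G : Defs.Hom Z B) :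
  i1 ⊚ p1 + i2 ⊚ p2 = idm B -> p1 ⊚ F = p1 ⊚ G -> p2 ⊚ F = p2 ⊚ G -> F = G.
Proof.
move=> H H1 H2; rewrite -(comp_id_l F) -(comp_id_l G) -H !comp_add_l.
by rewrite !comp_assoc H1 H2.
Qed.

End PA.

Section TC.
Variable C : TriCat.
Implicit Types X Y Z W A B : Obj C.

Lemma Smor0 X Y : Smor (0 : Defs.Hom X Y) = 0.
Proof.
have H := Smor_add (0 : Defs.Hom X Y) 0. rewrite addr0 in H.
by apply: (addrI (Smor (0 : Defs.Hom X Y))); rewrite -H addr0.
Qed.

Lemma SmorN X Y (f : Defs.Hom X Y) : Smor (- f) = - Smor f.
Proof. by apply/eqP; rewrite -addr_eq0 -Smor_add addNr Smor0. Qed.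

Lemma SmorB X Y (f g : Defs.Hom X Y) : Smor (f - g) = Smor f - Smor g.
Proof. by rewrite Smor_add SmorN. Qed.

Lemma Smor_inj X Y : injective (@Smor C X Y).
Proof. exact: bij_inj (Smor_bij X Y). Qed.

Lemma Smor_surj X Y (g : Defs.Hom (Sob X) (Sob Y)) : exists f, Smor f = g.
Proof. case: (Smor_bij X Y) => h _ K; by exists (h g). Qed.

Lemma Smor_eq0 X Y (f : Defs.Hom X Y) : Smor f = 0 -> f = 0.
Proof. by rewrite -(Smor0 X Y) => /Smor_inj. Qed.

Lemma Smor_iso X Y (f : Defs.Hom X Y) : is_iso f -> is_iso (Smor f).
Proof.
move=> [g [H1 H2]]; exists (Smor g); split.
  by rewrite -Smor_comp H1 Smor_id.
by rewrite -Smor_comp H2 Smor_id.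
Qed.

Lemma Sob_zero X : is_zero X -> is_zero (Sob X).
Proof. by move=> H; rewrite /is_zero -Smor_id H Smor0. Qed.

Lemma zo_z : is_zero (@zo C).
Proof. exact: zo_zero. Qed.

Lemma dist_rot (T : triangle C) : dist T -> dist (rotate T).
Proof. by move/(TR2 T). Qed.

Lemma dist_zo_tri W : dist (@Tri C zo W W 0 (idm W) 0).
Proof.
apply/(TR2 _); rewrite /rotate /=.
apply: (TR1_iso _ (TR1_id W)).
exists (idm W), (idm W), 0; split.
- split => /=.
  + by [].
  + by rewrite comp0r comp0l.
  + by rewrite Smor0 oppr0 !comp0r.
- exact: iso_id.
- exact: iso_id.
- apply: iso_zero; [exact: zo_z | apply: Sob_zero; exact: zo_z].
Qed.

Lemma dist_comp_gf (T : triangle C) : dist T -> tg T ⊚ tf T = 0.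
Proof.
move=> HT.
have [c [_ H2 _]] := @TR3 C (Tri (idm (tX T)) 0 0) T (idm (tX T)) (tf T) (TR1_id (tX T)) HT erefl.
by move: H2 => /= <-; rewrite comp0r.
Qed.

Lemma dist_comp_hg (T : triangle C) : dist T -> th T ⊚ tg T = 0.
Proof. by move=> /dist_rot /dist_comp_gf. Qed.

Lemma dist_comp_fh (T : triangle C) : dist T -> Smor (tf T) ⊚ th T = 0.
Proof.
move=> /dist_rot /dist_rot /dist_comp_gf /=.
by rewrite compNl => /eqP; rewrite oppr_eq0 => /eqP.
Qed.

Lemma exactY (T : triangle C) : dist T ->
  forall W (u : Defs.Hom W (tY T)), tg T ⊚ u = 0 -> exists v, u = tf T ⊚ v.
Proof.
move=> HT W u Hu.
have HS := dist_rot (TR1_id W).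
have [c [_ _ H3]] := @TR3 C (rotate (Tri (idm W) 0 0)) (rotate T) u 0 HS (dist_rot HT) ltac:(by rewrite /= comp0l Hu).
move: H3; rewrite /= compNr compNl Smor_id comp_id_r => /eqP; rewrite eqr_opp => /eqP H3.
have [v Hv] := Smor_surj c.
exists v; apply: Smor_inj; by rewrite Smor_comp Hv.
Qed.

Lemma exactZ (T : triangle C) : dist T ->
  forall W (u : Defs.Hom W (tZ T)), th T ⊚ u = 0 -> exists v, u = tg T ⊚ v.
Proof. by move=> /dist_rot /exactY. Qed.

Lemma exactX (T : triangle C) : dist T ->
  forall W (u : Defs.Hom W (Sob (tX T))), Smor (tf T) ⊚ u = 0 -> exists v, u = th T ⊚ v.
Proof.
move=> /dist_rot /dist_rot /exactY /= H W u Hu; apply: H.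
by rewrite compNl Hu oppr0.
Qed.

Lemma coexactY (T : triangle C) : dist T ->
  forall W (u : Defs.Hom (tY T) W), u ⊚ tf T = 0 -> exists v, u = v ⊚ tg T.
Proof.
move=> HT W u Hu.
have [c [_ H2 _]] := @TR3 C T (Tri 0 (idm W) 0) 0 u HT (dist_zo_tri W) ltac:(by rewrite /= comp0l Hu).
by exists c; move: H2 => /= ->; rewrite comp_id_l.
Qed.

Lemma split_mono_h0 (T : triangle C) : dist T -> th T = 0 ->
  exists r, r ⊚ tf T = idm (tX T).
Proof.
move=> HT Hh.
have [v Hv] := coexactY (dist_rot (dist_rot HT)) (u := idm _) ltac:(by rewrite /= comp_id_l Hh).
move: Hv => /=; rewrite compNr => Hv.
have [r Hr] := Smor_surj (- v).
exists r; apply: Smor_inj; by rewrite Smor_comp Hr compNl Smor_id.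
Qed.

Lemma split_epi_g0 (T : triangle C) : dist T -> tg T = 0 ->
  exists s, tf T ⊚ s = idm (tY T).
Proof.
move=> HT Hg.
have [v Hv] := exactY HT (u := idm _) ltac:(by rewrite Hg comp0l).
by exists v.
Qed.

End TC.

Section TC2.
Variable C : TriCat.
Implicit Types X Y Z W A B : Obj C.

Lemma cone_split A X Z (i : Defs.Hom A X) (q : Defs.Hom X Z) (k : Defs.Hom Z (Sob A))
  (p : Defs.Hom X A) :
  dist (Tri i q k) -> p ⊚ i = idm A ->
  k = 0 /\ exists j : Defs.Hom Z X,
    [/\ q ⊚ j = idm Z, p ⊚ j = 0, q ⊚ i = 0 & i ⊚ p + j ⊚ q = idm X].
Proof.
move=> HT Hpi.
have Hqi : q ⊚ i = 0 := dist_comp_gf HT.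
have Hk : k = 0.
  have H := dist_comp_fh HT; simpl in H.
  by rewrite -(comp_id_l k) -Smor_id -Hpi Smor_comp comp_assoc H comp0r.
split => //.
have [j0 Hj0] := exactZ HT (u := idm Z) ltac:(by rewrite /= Hk comp0l).
simpl in Hj0.
pose j := j0 - i ⊚ (p ⊚ j0).
have Hqj : q ⊚ j = idm Z by rewrite /j compBr compA' Hqi comp0l subr0 Hj0.
have Hpj : p ⊚ j = 0 by rewrite /j compBr compA' Hpi comp_id_l subrr.
exists j; split => //.
pose e := idm X - i ⊚ p - j ⊚ q.
have Hqe : q ⊚ e = 0.
  by rewrite /e !compBr comp_id_r compA' Hqi comp0l compA' Hqj comp_id_l subr0 subrr.
have [w Hw] := exactY HT (u := e) Hqe.
simpl in Hw.
have Hpe : p ⊚ e = 0.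
  by rewrite /e !compBr comp_id_r compA' Hpi comp_id_l compA' Hpj comp0l subrr subr0.
have Hw0 : w = 0 by rewrite -(comp_id_l w) -Hpi comp_assoc -Hw Hpe.
move: Hw; rewrite Hw0 comp0r /e => /eqP; rewrite subr_eq0 => /eqP.
move/eqP; rewrite subr_eq => /eqP ->; by rewrite addrC.
Qed.

Lemma complement A X (i : Defs.Hom A X) (p : Defs.Hom X A) : p ⊚ i = idm A ->
  exists Z (j : Defs.Hom Z X) (q : Defs.Hom X Z),
    [/\ q ⊚ j = idm Z, p ⊚ j = 0, q ⊚ i = 0 & i ⊚ p + j ⊚ q = idm X].
Proof.
move=> Hpi; have [Z [q [k HT]]] := TR1_ext i.
have [_ [j Hj]] := cone_split HT Hpi.
by exists Z, j, q.
Qed.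

Lemma decomp_iso A X Z (i : Defs.Hom A X) (p : Defs.Hom X A) (j : Defs.Hom Z X) (q : Defs.Hom X Z) :
  p ⊚ i = idm A -> q ⊚ j = idm Z -> p ⊚ j = 0 -> q ⊚ i = 0 -> i ⊚ p + j ⊚ q = idm X ->
  (i ⊚ bp1 + j ⊚ bp2) ⊚ (Defs.bin1 ⊚ p + Defs.bin2 ⊚ q) = idm X /\
  (Defs.bin1 ⊚ p + Defs.bin2 ⊚ q) ⊚ (i ⊚ bp1 + j ⊚ bp2) = idm (bs A Z).
Proof.
move=> H1 H2 H3 H4 H5; split.
  rewrite comp_add_l !comp_add_r !comp_assoc !(compA' bp1) !(compA' bp2).
  by rewrite bp1_in1 bp1_in2 bp2_in1 bp2_in2 !comp0l !comp0r !comp_id_l addr0 add0r.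
rewrite comp_add_l !comp_add_r !comp_assoc !(compA' p) !(compA' q).
by rewrite H1 H2 H3 H4 !comp0l !comp0r !comp_id_l addr0 add0r bs_id.
Qed.

End TC2.

Section Rank.
Variable C : TriCat.
Variable rho : forall X Y : Obj C, Defs.Hom X Y -> Rdefinitions.R.
Hypothesis Hrk : rank_function rho.
Hypothesis Hfa : morphism_faithful rho.
Hypothesis Hpr : prime_rank rho.
Implicit Types X Y Z W A B S : Obj C.

Local Notation rk f := (rho f).

Lemma rk_ge0 X Y (f : Defs.Hom X Y) : 0 <= rk f.
Proof. by case: Hrk. Qed.
Lemma rk_S X Y (f : Defs.Hom X Y) : rk (Smor f) = rk f.
Proof. by case: Hrk. Qed.
Lemma rk_msum X1 X2 Y1 Y2 (f : Defs.Hom X1 Y1) (g : Defs.Hom X2 Y2) :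
  rk (msum f g) = rk f + rk g.
Proof. by case: Hrk. Qed.
Lemma rk_tri (T : triangle C) : dist T -> rk (tf T) + rk (tg T) = rk (idm (tY T)).
Proof. by case: Hrk => _ _ _; apply. Qed.
Lemma rk_int X Y (f : Defs.Hom X Y) : exists z : int, rk f = z%:~R.
Proof. by case: Hpr => H _; apply: H. Qed.

Lemma rk_ge1 X Y (f : Defs.Hom X Y) : f != 0 -> 1 <= rk f.
Proof.
move=> Hf; have := Hfa Hf; have [z Hz] := rk_int f; have := rk_ge0 f.
rewrite Hz ler0z intr_eq0 ler1z => *; lia.
Qed.

Lemma rk_eq0 X Y (f : Defs.Hom X Y) : rk f = 0 -> f = 0.
Proof.
move=> H; case: (eqVneq f 0) => // /rk_ge1; rewrite H => H1; exfalso; lra.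
Qed.

Lemma rk_id_zo : rk (idm (@zo C)) = 0.
Proof.
have := rk_tri (TR1_id (@zo C)); rewrite /=.
have E : idm (@zo C) = 0 := zo_z C.
rewrite -E => *; lra.
Qed.

Lemma rk_0zo A : rk (0 : Defs.Hom A (@zo C)) = 0.
Proof. have := rk_tri (TR1_id A); rewrite /= => *; lra. Qed.

Lemma dist_iso_tri A B (w : Defs.Hom A B) : is_iso w ->
  dist (Tri w (0 : Defs.Hom B (@zo C)) (0 : Defs.Hom zo (Sob A))).
Proof.
move=> Hw; apply: (TR1_iso _ (TR1_id A)).
exists (idm A), w, (idm zo); split => //; last exact: iso_id; last exact: iso_id.
by split => /=; rewrite ?comp0r ?comp0l.
Qed.

Lemma iso_opp A B (f : Defs.Hom A B) : is_iso f -> is_iso (- f).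
Proof.
move=> [g [H1 H2]]; exists (- g); split; by rewrite compNl compNr opprK.
Qed.

Lemma rk_iso A B (u : Defs.Hom A B) : is_iso u -> rk u = rk (idm A) /\ rk u = rk (idm B).
Proof.
have key (w : Defs.Hom A B) : is_iso w -> rk w = rk (idm B) /\ rk (- Smor w) = rk (idm A).
  move=> Hw; have H0 := dist_iso_tri Hw.
  have E1 := rk_tri H0; rewrite /= rk_0zo addr0 in E1.
  have E2 := rk_tri (dist_rot H0); rewrite /= rk_id_zo rk_0zo in E2.
  have E3 := rk_tri (dist_rot (dist_rot H0)); rewrite /= -Smor_id rk_S in E3.
  have := rk_ge0 (0 : Defs.Hom zo (Sob A)).
  move=> *; split => //; lra.
move=> Hu; have [_ K1] := key _ (iso_opp Hu); have [K2 _] := key _ Hu.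
by rewrite SmorN opprK rk_S in K1.
Qed.

Lemma rk_id_iso A B (u : Defs.Hom A B) : is_iso u -> rk (idm A) = rk (idm B).
Proof. by move=> /rk_iso [<- <-]. Qed.

Lemma rk_id_zero X : is_zero X -> rk (idm X) = 0.
Proof.
move=> HX; rewrite (rk_id_iso (iso_zero (0 : Defs.Hom X (@zo C)) HX (zo_z C))); exact: rk_id_zo.
Qed.

Lemma rk_id_S X : rk (idm (Sob X)) = rk (idm X).
Proof. by rewrite -Smor_id rk_S. Qed.

Lemma rk_id_bs A B : rk (idm (bs A B)) = rk (idm A) + rk (idm B).
Proof. by rewrite -rk_msum /msum !comp_id_l bs_id. Qed.

Lemma rank1_mono S A (u : Defs.Hom S A) : rk (idm S) = 1 -> u != 0 ->
  exists r, r ⊚ u = idm S.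
Proof.
move=> HS Hu; have [Z [g [h HT]]] := TR1_ext u.
have E := rk_tri (dist_rot (dist_rot HT)); rewrite /= rk_id_S HS -SmorN rk_S in E.
have Hnu : - u != 0 by rewrite oppr_eq0.
have := rk_ge1 Hnu; have := rk_ge0 h => *.
have Hh : rk h = 0 by lra.
exact: (split_mono_h0 HT (rk_eq0 Hh)).
Qed.

Lemma rank1_iso S A (u : Defs.Hom S A) : rk (idm S) = 1 -> rk (idm A) = 1 -> u != 0 ->
  is_iso u.
Proof.
move=> HS HA Hu; have [r Hr] := rank1_mono HS Hu.
have [Z [g [h HT]]] := TR1_ext u.
have E := rk_tri HT; rewrite /= HA in E.
have := rk_ge1 Hu; have := rk_ge0 g => *.
have Hg : rk g = 0 by lra.
have [s Hs] := split_epi_g0 HT (rk_eq0 Hg); simpl in Hs.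
have Hrs : r = s by rewrite -(comp_id_r r) -Hs compA' Hr comp_id_l.
by exists r; split => //; rewrite Hrs.
Qed.



Definition orbit X W := forall K : Obj C -> Prop, K X ->
  (forall W1 W2 (f : Defs.Hom W1 W2), is_iso f -> K W1 -> K W2) ->
  (forall W, K W -> K (Sob W)) -> (forall W, K (Sob W) -> K W) -> K W.

Lemma orbit_refl X : orbit X X.
Proof. by move=> K H0. Qed.

Lemma orbit_iso X W1 W2 (f : Defs.Hom W1 W2) : orbit X W1 -> is_iso f -> orbit X W2.
Proof. move=> H Hf K H0 H1 H2 H3; apply: (H1 _ _ f Hf); exact: H. Qed.

Lemma orbit_S X W : orbit X W -> orbit X (Sob W).
Proof. move=> H K H0 H1 H2 H3; apply: (H2 W); exact: H. Qed.

Lemma orbit_Sinv X W : orbit X (Sob W) -> orbit X W.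
Proof. move=> H K H0 H1 H2 H3; apply: (H3 W); exact: H. Qed.

Lemma orbit_rk1 G W : rk (idm G) = 1 -> orbit G W -> rk (idm W) = 1.
Proof.
move=> HG H; apply: (H (fun W => rk (idm W) = 1)) => //.
- by move=> W1 W2 f Hf <-; rewrite (rk_id_iso Hf).
- by move=> W0; rewrite rk_id_S.
- by move=> W0; rewrite rk_id_S.
Qed.

Definition Qv X A := forall W, orbit X W -> forall u : Defs.Hom A W, u = 0.

Lemma Qv_S X A : Qv X A -> Qv X (Sob A).
Proof.
move=> HQ W HW u.
have [W0 [psi [psii [Hp1 Hp2]]]] := Sob_ess W.
have HW0 : orbit X W0.
  apply: orbit_Sinv; apply: (orbit_iso HW); exact: (iso_sym Hp1 Hp2).
have [u0 Hu0] := Smor_surj (psii ⊚ u).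
have := HQ W0 HW0 u0 => E; rewrite E Smor0 in Hu0.
by rewrite -(comp_id_l u) -Hp2 comp_assoc -Hu0 comp0r.
Qed.

Lemma Q_thick X : thick_subcat (Qv X).
Proof.
split; [split|].
- move=> W _ u; exact: zero_from (zo_z C).
- move=> X1 Y1 f [g [H1 H2]] HQ W HW u.
  by rewrite -(comp_id_r u) -H2 compA' (HQ W HW (u ⊚ f)) comp0l.
- move=> A; split; first exact: Qv_S.
  move=> HQ W HW u; apply: Smor_eq0; exact: (HQ (Sob W) (orbit_S HW) (Smor u)).
- move=> T HT HX HY W HW u.
  have Hug : u ⊚ tg T = 0 := HY W HW _.
  have [v Hv] := coexactY (dist_rot HT) (u := u) Hug.
  by rewrite Hv (Qv_S HX HW v) comp0l.
- move=> A B HQ W HW u.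
  by rewrite -(comp_id_r u) -(bp1_in1 A B) compA' (HQ W HW (u ⊚ bp1)) comp0l.
Qed.

Lemma nz_from_gen G (HG : thick_generator G) X : ~ is_zero X ->
  exists G', orbit G G' /\ exists s : Defs.Hom G' X, s != 0.
Proof.
move=> HX.
have [W [HW [u Hu]]] : exists W, orbit X W /\ exists u : Defs.Hom G W, u != 0.
  apply: NNPP => Hn; apply: HX.
  have HQG : Qv X G.
    move=> W HW u; apply: NNPP => Hu; apply: Hn.
    by exists W; split => //; exists u; apply/eqP.
  have HH := HG (Qv X) (Q_thick X) HQG X.
  exact: (HH X (@orbit_refl X) (idm X)).
pose K W := (exists G', orbit G G' /\ exists s : Defs.Hom G' W, s != 0) ->
  (exists G', orbit G G' /\ exists s : Defs.Hom G' X, s != 0).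
have HK : K W.
  apply: (HW K).
  - by [].
  - move=> W1 W2 f [g [Hgf Hfg]] IH [G' [HG' [s Hs]]]; apply: IH.
    exists G'; split => //; exists (g ⊚ s); apply/eqP => H0.
    move: Hs; by rewrite -(comp_id_l s) -Hfg comp_assoc H0 comp0r eqxx.
  - move=> W1 IH [G' [HG' [s Hs]]].
    have [G0 [psi [psii [Hp1 Hp2]]]] := Sob_ess G'.
    have [s0 Hs0] := Smor_surj (s ⊚ psi).
    apply: IH; exists G0; split.
      apply: orbit_Sinv; apply: (orbit_iso HG'); exact: (iso_sym Hp1 Hp2).
    exists s0; apply/eqP => E; rewrite E Smor0 in Hs0.
    move: Hs; by rewrite -(comp_id_r s) -Hp2 compA' -Hs0 comp0l eqxx.
  - move=> W1 IH [G' [HG' [s Hs]]]; apply: IH.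
    exists (Sob G'); split; first exact: orbit_S.
    exists (Smor s); apply/eqP => /Smor_eq0 E; by rewrite E eqxx in Hs.
apply: HK; exists G; split; [exact: orbit_refl | by exists u].
Qed.

Lemma copair_pair A1 A2 B1 B2 V U (k1 : Defs.Hom B1 V) (k2 : Defs.Hom B2 V)
  (H1 : Defs.Hom A1 B1) (H2 : Defs.Hom A2 B2) (x : Defs.Hom U A1) (y : Defs.Hom U A2) :
  (k1 ⊚ (H1 ⊚ bp1) + k2 ⊚ (H2 ⊚ bp2)) ⊚ (Defs.bin1 ⊚ x + Defs.bin2 ⊚ y)
  = k1 ⊚ (H1 ⊚ x) + k2 ⊚ (H2 ⊚ y).
Proof.
rewrite comp_add_l !comp_add_r !comp_assoc !(compA' bp1) !(compA' bp2).
by rewrite bp1_in1 bp1_in2 bp2_in1 bp2_in2 !comp0l !comp0r addr0 add0r !comp_id_l.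
Qed.

Lemma pair_comp A1 A2 U U' (x : Defs.Hom U A1) (y : Defs.Hom U A2) (z : Defs.Hom U' U) :
  (Defs.bin1 ⊚ x + Defs.bin2 ⊚ y) ⊚ z = Defs.bin1 ⊚ (x ⊚ z) + Defs.bin2 ⊚ (y ⊚ z).
Proof. by rewrite comp_add_l !comp_assoc. Qed.

Lemma msum_bin1 X1 X2 Y1 Y2 (F : Defs.Hom X1 Y1) (G : Defs.Hom X2 Y2) :
  msum F G ⊚ Defs.bin1 = Defs.bin1 ⊚ F.
Proof.
by rewrite /msum comp_add_l !comp_assoc bp1_in1 bp2_in1 !comp_id_r comp0r comp0r addr0.
Qed.

Lemma msum_bin2 X1 X2 Y1 Y2 (F : Defs.Hom X1 Y1) (G : Defs.Hom X2 Y2) :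
  msum F G ⊚ Defs.bin2 = Defs.bin2 ⊚ G.
Proof.
by rewrite /msum comp_add_l !comp_assoc bp1_in2 bp2_in2 !comp_id_r comp0r comp0r add0r.
Qed.

Lemma bp1_msum X1 X2 Y1 Y2 (F : Defs.Hom X1 Y1) (G : Defs.Hom X2 Y2) :
  bp1 ⊚ msum F G = F ⊚ bp1.
Proof.
by rewrite /msum comp_add_r !compA' bp1_in1 bp1_in2 !comp_id_l comp0l comp0l addr0.
Qed.

Lemma bp2_msum X1 X2 Y1 Y2 (F : Defs.Hom X1 Y1) (G : Defs.Hom X2 Y2) :
  bp2 ⊚ msum F G = G ⊚ bp2.
Proof.
by rewrite /msum comp_add_r !compA' bp2_in1 bp2_in2 !comp_id_l comp0l comp0l add0r.
Qed.

Lemma msum_comp X1 X2 Y1 Y2 Z1 Z2 (F : Defs.Hom Y1 Z1) (G : Defs.Hom Y2 Z2)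
  (F' : Defs.Hom X1 Y1) (G' : Defs.Hom X2 Y2) :
  msum F G ⊚ msum F' G' = msum (F ⊚ F') (G ⊚ G').
Proof.
apply: (ext_out (bs_id _ _)).
  by rewrite comp_assoc msum_bin1 compA' !msum_bin1 comp_assoc.
by rewrite comp_assoc msum_bin2 compA' !msum_bin2 comp_assoc.
Qed.

Lemma msum_id X1 X2 : msum (idm X1) (idm X2) = idm (bs X1 X2).
Proof. by rewrite /msum !comp_id_l bs_id. Qed.

Lemma msum_iso X1 X2 Y1 Y2 (F : Defs.Hom X1 Y1) (G : Defs.Hom X2 Y2) :
  is_iso F -> is_iso G -> is_iso (msum F G).
Proof.
move=> [F' [H1 H2]] [G' [H3 H4]]; exists (msum F' G'); split.
  by rewrite msum_comp H1 H3 msum_id.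
by rewrite msum_comp H2 H4 msum_id.
Qed.

Lemma tri_morph_comp (T1 T2 T3 : triangle C) a b c a' b' c' :
  tri_morph (T:=T1) (T':=T2) a b c -> tri_morph (T:=T2) (T':=T3) a' b' c' ->
  tri_morph (a' ⊚ a) (b' ⊚ b) (c' ⊚ c).
Proof.
move=> [M1 M2 M3] [N1 N2 N3]; split.
- by rewrite comp_assoc M1 compA' N1 comp_assoc.
- by rewrite comp_assoc M2 compA' N2 comp_assoc.
- by rewrite Smor_comp comp_assoc M3 compA' N3 comp_assoc.
Qed.

Lemma tri_iso_trans (T1 T2 T3 : triangle C) : tri_iso T1 T2 -> tri_iso T2 T3 -> tri_iso T1 T3.
Proof.
move=> [a [b [c [M Ha Hb Hc]]]] [a' [b' [c' [M' Ha' Hb' Hc']]]].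
exists (a' ⊚ a), (b' ⊚ b), (c' ⊚ c); split; try exact: iso_comp.
exact: tri_morph_comp M M'.
Qed.

Lemma tri_iso_refl (T : triangle C) : tri_iso T T.
Proof.
exists (idm _), (idm _), (idm _); split; try exact: iso_id.
by split; rewrite ?Smor_id !comp_id_l !comp_id_r.
Qed.

Lemma tri_iso_tsum (T1 T T' : triangle C) : tri_iso T T' -> tri_iso (tsum T1 T) (tsum T1 T').
Proof.
move=> [a [b [c [[M1 M2 M3] Ha Hb Hc]]]].
exists (msum (idm _) a), (msum (idm _) b), (msum (idm _) c); split;
  try (apply: msum_iso => //; exact: iso_id).
split => /=.
- by rewrite !msum_comp !comp_id_l !comp_id_r M1.
- by rewrite !msum_comp !comp_id_l !comp_id_r M2.
- rewrite comp_add_r comp_add_l !compA' -!Smor_comp msum_bin1 msum_bin2 !comp_id_r.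
  rewrite !comp_assoc bp1_msum bp2_msum comp_id_l Smor_comp !comp_assoc (compA' (Smor a)) M3.
  by rewrite !comp_assoc.
Qed.

Definition good (T : triangle C) : Prop :=
  [/\ tg T ⊚ tf T = 0, th T ⊚ tg T = 0 & Smor (tf T) ⊚ th T = 0] /\
  [/\ (forall W (u : Defs.Hom W (tY T)), tg T ⊚ u = 0 -> exists v, u = tf T ⊚ v),
      (forall W (u : Defs.Hom W (tZ T)), th T ⊚ u = 0 -> exists v, u = tg T ⊚ v) &
      (forall W (u : Defs.Hom W (Sob (tX T))), Smor (tf T) ⊚ u = 0 -> exists v, u = th T ⊚ v)].

Lemma dist_good T : dist T -> good T.
Proof.
move=> HT; split; split.
- exact: dist_comp_gf.
- exact: dist_comp_hg.
- exact: dist_comp_fh.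
- move=> W u; exact: exactY.
- move=> W u; exact: exactZ.
- move=> W u; exact: exactX.
Qed.

Definition dec A X X' (i : Defs.Hom A X) (p : Defs.Hom X A) (j : Defs.Hom X' X) (q : Defs.Hom X X') :=
  [/\ p ⊚ i = idm A, q ⊚ j = idm X', p ⊚ j = 0, q ⊚ i = 0 & i ⊚ p + j ⊚ q = idm X].

Lemma dec_exists A X (i : Defs.Hom A X) (p : Defs.Hom X A) : p ⊚ i = idm A ->
  exists X' (j : Defs.Hom X' X) (q : Defs.Hom X X'), dec i p j q.
Proof.
move=> H; have [X' [j [q [H1 H2 H3 H4]]]] := complement H.
by exists X', j, q; split.
Qed.

Lemma dec_S A X X' (i : Defs.Hom A X) (p : Defs.Hom X A) (j : Defs.Hom X' X) (q : Defs.Hom X X') :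
  dec i p j q -> dec (Smor i) (Smor p) (Smor j) (Smor q).
Proof.
move=> [H1 H2 H3 H4 H5]; split; rewrite -?Smor_comp.
- by rewrite H1 Smor_id.
- by rewrite H2 Smor_id.
- by rewrite H3 Smor0.
- by rewrite H4 Smor0.
- by rewrite -Smor_add H5 Smor_id.
Qed.

Lemma arrow_split U V U1 V1 U' V' (F : Defs.Hom U V) (F1 : Defs.Hom U1 V1)
  (iU : Defs.Hom U1 U) (pU : Defs.Hom U U1) (jU : Defs.Hom U' U) (qU : Defs.Hom U U')
  (iV : Defs.Hom V1 V) (pV : Defs.Hom V V1) (jV : Defs.Hom V' V) (qV : Defs.Hom V V')
  (F' : Defs.Hom U' V') :
  dec iU pU jU qU -> dec iV pV jV qV -> F ⊚ iU = iV ⊚ F1 -> pV ⊚ F = F1 ⊚ pU ->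
  F' = qV ⊚ F ⊚ jU ->
  F ⊚ jU = jV ⊚ F' /\ qV ⊚ F = F' ⊚ qU.
Proof.
move=> [DU1 DU2 DU3 DU4 DU5] [DV1 DV2 DV3 DV4 DV5] Hi Hp ->; split.
  have EV : jV ⊚ qV = idm V - iV ⊚ pV by rewrite -DV5 addrAC subrr add0r.
  rewrite !compA' EV !compBl comp_id_l !comp_assoc (compA' pV) Hp comp_assoc DU3.
  by rewrite !comp0r subr0.
have EU : jU ⊚ qU = idm U - iU ⊚ pU by rewrite -DU5 addrAC subrr add0r.
rewrite !comp_assoc EU compBr comp_id_r (compA' F) Hi compBr !comp_assoc (compA' qV) DV4.
by rewrite comp0l subr0.
Qed.

Lemma decomp_is_iso A X X' (i : Defs.Hom A X) (p : Defs.Hom X A) (j : Defs.Hom X' X) (q : Defs.Hom X X') :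
  dec i p j q -> is_iso (Defs.bin1 ⊚ p + Defs.bin2 ⊚ q).
Proof.
move=> [H1 H2 H3 H4 H5]; have [E1 E2] := decomp_iso H1 H2 H3 H4 H5.
by exists (i ⊚ bp1 + j ⊚ bp2).
Qed.

Lemma rk_dec A X X' (i : Defs.Hom A X) (p : Defs.Hom X A) (j : Defs.Hom X' X) (q : Defs.Hom X X') :
  dec i p j q -> rk (idm X) = rk (idm A) + rk (idm X').
Proof. by move=> /decomp_is_iso /rk_id_iso ->; rewrite rk_id_bs. Qed.

Definition Nt (T : triangle C) := rk (idm (tX T)) + rk (idm (tY T)) + rk (idm (tZ T)).

Lemma peel (T T1 : triangle C) iX iY iZ pX pY pZ :
  good T -> tri_morph (T:=T1) (T':=T) iX iY iZ -> tri_morph (T:=T) (T':=T1) pX pY pZ ->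
  pX ⊚ iX = idm _ -> pY ⊚ iY = idm _ -> pZ ⊚ iZ = idm _ ->
  exists T', [/\ good T', tri_iso T (tsum T1 T') & Nt T = Nt T1 + Nt T'].
Proof.
case: T iX iY iZ pX pY pZ => X Y Z f g h; case: T1 => X1 Y1 Z1 f1 g1 h1 /=.
move=> iX iY iZ pX pY pZ [[Hgf Hhg Hfh] [EY EZ EX]] [Mi1 Mi2 Mi3] [Mp1 Mp2 Mp3] HX HY HZ.
simpl in *.
have [X' [jX [qX DX]]] := dec_exists HX.
have [Y' [jY [qY DY]]] := dec_exists HY.
have [Z' [jZ [qZ DZ]]] := dec_exists HZ.
have [f' Ef'] : exists f', f' = qY ⊚ f ⊚ jX by eexists.
have [g' Eg'] : exists g', g' = qZ ⊚ g ⊚ jY by eexists.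
have [h' Eh'] : exists h', h' = Smor qX ⊚ h ⊚ jZ by eexists.
have [Af1 Af2] := arrow_split DX DY (esym Mi1) Mp1 Ef'.
have [Ag1 Ag2] := arrow_split DY DZ (esym Mi2) Mp2 Eg'.
have [Ah1 Ah2] := arrow_split DZ (dec_S DX) (esym Mi3) Mp3 Eh'.
have [DX1 DX2 DX3 DX4 DX5] := DX.
have [DY1 DY2 DY3 DY4 DY5] := DY.
have [DZ1 DZ2 DZ3 DZ4 DZ5] := DZ.
exists (Tri f' g' h'); split.
- split; split => /=.
  + by rewrite Ef' !compA' -Ag2 (comp_assoc qZ) Hgf comp0r !comp0l.
  + by rewrite Eg' !compA' -Ah2 (comp_assoc (Smor qX)) Hhg comp0r !comp0l.
  + by rewrite Eh' !compA' -Smor_comp -Af2 Smor_comp (comp_assoc (Smor qY)) Hfh comp0r !comp0l.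
  + move=> W u Hu.
    have [v Hv] := EY W (jY ⊚ u) ltac:(by rewrite compA' Ag1 comp_assoc Hu comp0r).
    exists (qX ⊚ v).
    by rewrite -(comp_id_l u) -DY2 comp_assoc Hv compA' Af2 comp_assoc.
  + move=> W u Hu.
    have [v Hv] := EZ W (jZ ⊚ u) ltac:(by rewrite compA' Ah1 comp_assoc Hu comp0r).
    exists (qY ⊚ v).
    by rewrite -(comp_id_l u) -DZ2 comp_assoc Hv compA' Ag2 comp_assoc.
  + move=> W u Hu.
    have [v Hv] := EX W (Smor jX ⊚ u)
      ltac:(by rewrite compA' -Smor_comp Af1 Smor_comp comp_assoc Hu comp0r).
    exists (qZ ⊚ v).
    by rewrite -(comp_id_l u) -Smor_id -DX2 Smor_comp comp_assoc Hv compA' Ah2 comp_assoc.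
- exists (Defs.bin1 ⊚ pX + Defs.bin2 ⊚ qX), (Defs.bin1 ⊚ pY + Defs.bin2 ⊚ qY),
    (Defs.bin1 ⊚ pZ + Defs.bin2 ⊚ qZ);
    split; [| exact: decomp_is_iso DX | exact: decomp_is_iso DY | exact: decomp_is_iso DZ].
  split => /=.
  + by rewrite pair_comp /msum copair_pair Mp1 Af2.
  + by rewrite pair_comp /msum copair_pair Mp2 Ag2.
  + rewrite copair_pair Smor_add !Smor_comp comp_add_l !comp_assoc Mp3 Ah2 //.
- rewrite /Nt /=.
  rewrite (rk_dec DX) (rk_dec DY) (rk_dec DZ); lra.
Qed.

Lemma zo_id : idm (@zo C) = 0.
Proof. exact: zo_z. Qed.

Definition piece (T : triangle C) :=
  exists (T1 : triangle C) (iX : Defs.Hom (tX T1) (tX T)) (iY : Defs.Hom (tY T1) (tY T))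
    (iZ : Defs.Hom (tZ T1) (tZ T)) (pX : Defs.Hom (tX T) (tX T1)) (pY : Defs.Hom (tY T) (tY T1))
    (pZ : Defs.Hom (tZ T) (tZ T1)),
  [/\ tri_morph (T:=T1) (T':=T) iX iY iZ, tri_morph (T:=T) (T':=T1) pX pY pZ,
      pX ⊚ iX = idm _, pY ⊚ iY = idm _ & pZ ⊚ iZ = idm _] /\
  has_iso_arrow T1 /\ 1 <= Nt T1.

Lemma piece1 (T : triangle C) S (v : Defs.Hom S (tX T)) :
  good T -> rk (idm S) = 1 -> tf T ⊚ v != 0 -> piece T.
Proof.
case: T v => X Y Z f g h v /= [[Hgf Hhg Hfh] _] HS Hfv.
have [r Hr] := rank1_mono HS Hfv.
exists (Tri (idm S) (0 : Defs.Hom S zo) (0 : Defs.Hom zo (Sob S))), v, (f ⊚ v),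
  (0 : Defs.Hom zo Z), (r ⊚ f), r, (0 : Defs.Hom Z zo).
split; first split.
- split => /=.
  + by rewrite comp_id_r.
  + by rewrite comp0r compA' Hgf comp0l.
  + by rewrite !comp0r.
- split => /=.
  + by rewrite comp_id_l.
  + by rewrite !comp0l.
  + by rewrite Smor_comp comp_assoc Hfh ?comp0r ?comp0l.
- by rewrite comp_assoc.
- by [].
- by rewrite comp0l zo_id.
split; first by left; exact: iso_id.
rewrite /Nt /= HS rk_id_zo; lra.
Qed.

Lemma piece2 (T : triangle C) S (v : Defs.Hom S (tY T)) :
  good T -> rk (idm S) = 1 -> tg T ⊚ v != 0 -> piece T.
Proof.
case: T v => X Y Z f g h v /= [[Hgf Hhg Hfh] _] HS Hgv.
have [r Hr] := rank1_mono HS Hgv.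
exists (Tri (0 : Defs.Hom zo S) (idm S) (0 : Defs.Hom S (Sob zo))), (0 : Defs.Hom zo X), v,
  (g ⊚ v), (0 : Defs.Hom X zo), (r ⊚ g), r.
split; first split.
- split => /=.
  + by rewrite !comp0r.
  + by rewrite comp_id_r.
  + by rewrite Smor0 comp0l compA' Hhg comp0l.
- split => /=.
  + by rewrite comp_assoc Hgf !comp0r.
  + by rewrite comp_id_l.
  + by rewrite Smor0 !comp0l.
- by rewrite comp0l zo_id.
- by rewrite comp_assoc.
- by [].
split; first by right; left; exact: iso_id.
rewrite /Nt /= HS rk_id_zo; lra.
Qed.

Lemma piece3 (T : triangle C) S (t : Defs.Hom S (tZ T)) :
  good T -> rk (idm S) = 1 -> th T ⊚ t != 0 -> piece T.
Proof.
case: T t => X Y Z f g h t /= [[Hgf Hhg Hfh] _] HS Hht.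
have [S3 [phi [phii [Hp1 Hp2]]]] := Sob_ess S.
have [x Hx] := Smor_surj (h ⊚ t ⊚ phi).
have HS3 : rk (idm (Sob S3)) = 1.
  by rewrite (rk_id_iso (iso_sym Hp2 Hp1 : is_iso phi)).
have Hx0 : Smor x != 0.
  apply/eqP => E; move: Hht; rewrite -(comp_id_r (h ⊚ t)) -Hp2 compA' -Hx E comp0l eqxx //.
have [R HR] := rank1_mono HS3 Hx0.
have [pX HpX] := Smor_surj R.
have Hfx : f ⊚ x = 0.
  by apply: Smor_eq0; rewrite Smor_comp Hx !compA' Hfh !comp0l.
exists (Tri (0 : Defs.Hom S3 zo) (0 : Defs.Hom zo (Sob S3)) (idm (Sob S3))), x,
  (0 : Defs.Hom zo Y), (t ⊚ phi), pX, (0 : Defs.Hom Y zo), (R ⊚ h).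
split; first split.
- split => /=.
  + by rewrite comp0r Hfx.
  + by rewrite !comp0r.
  + by rewrite comp_id_r Hx comp_assoc.
- split => /=.
  + by rewrite !comp0l.
  + by rewrite comp_assoc Hhg !comp0r.
  + by rewrite HpX comp_id_l.
- by apply: Smor_inj; rewrite Smor_comp HpX HR Smor_id.
- by rewrite comp0l zo_id.
- by rewrite -HR Hx !comp_assoc.
split; first by right; right; exact: iso_id.
rewrite /Nt /= rk_id_zo HS3 -rk_id_S HS3; lra.
Qed.

Lemma find_piece G (HG : thick_generator G) (HG1 : rk (idm G) = 1) (T : triangle C) :
  good T -> ~ [/\ is_zero (tX T), is_zero (tY T) & is_zero (tZ T)] -> piece T.
Proof.
case: T => X Y Z f g h /= Hgood Hnz.
have Hgood' := Hgood; case: Hgood' => [[Hgf Hhg Hfh] [/= EY EZ EX]].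
have [HX|HX] := classic (is_zero X); last first.
  have [G' [HG' [s Hs]]] := nz_from_gen HG HX; have HS := orbit_rk1 HG1 HG'.
  case: (eqVneq (f ⊚ s) 0) => Hfs; last exact: (piece1 (T := Tri f g h) (v := s)).
  have [t Ht] := EX _ (Smor s) ltac:(by rewrite -Smor_comp Hfs Smor0).
  apply: (piece3 (T := Tri f g h) (S := Sob G') (t := t)) => //=.
    by rewrite rk_id_S.
  by rewrite -Ht; apply/eqP => /Smor_eq0 E; rewrite E eqxx in Hs.
have [HY|HY] := classic (is_zero Y); last first.
  have [G' [HG' [s Hs]]] := nz_from_gen HG HY; have HS := orbit_rk1 HG1 HG'.
  case: (eqVneq (g ⊚ s) 0) => Hgs; last exact: (piece2 (T := Tri f g h) (v := s)).
  have [v Hv] := EY _ s Hgs.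
  by apply: (piece1 (T := Tri f g h) (v := v)) => //=; rewrite -Hv.
have HZ : ~ is_zero Z by move=> HZ; apply: Hnz.
have [G' [HG' [s Hs]]] := nz_from_gen HG HZ; have HS := orbit_rk1 HG1 HG'.
case: (eqVneq (h ⊚ s) 0) => Hhs; last exact: (piece3 (T := Tri f g h) (t := s)).
have [v Hv] := EZ _ s Hhs.
by apply: (piece2 (T := Tri f g h) (v := v)) => //=; rewrite -Hv.
Qed.

Lemma Nt_ge0 T : 0 <= Nt T.
Proof.
rewrite /Nt; have := rk_ge0 (idm (tX T)); have := rk_ge0 (idm (tY T)).
have := rk_ge0 (idm (tZ T)) => *; lra.
Qed.

Lemma split_good G (HG : thick_generator G) (HG1 : rk (idm G) = 1) :
  forall (n : nat) T, good T -> Nt T <= n%:R -> split_triangle T.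
Proof.
elim => [|n IH] T HT HN;
  (have [Hz|Hnz] := classic [/\ is_zero (tX T), is_zero (tY T) & is_zero (tZ T)];
   [ case: Hz => HX HY HZ; exists T, [::]; split;
     [ exact: tri_iso_refl | left; exact: iso_zero | exact: List.Forall_nil ]
   | have [T1 [iX [iY [iZ [pX [pY [pZ [[M1 M2 R1 R2 R3] [HT1 HN1]]]]]]]]] :=
       find_piece HG HG1 HT Hnz;
     have [T' [HT' Hiso HNt]] := peel HT M1 M2 R1 R2 R3;
     have := Nt_ge0 T' ]).
- move=> *; exfalso; lra.
- move=> H0.
  have HN' : Nt T' <= n%:R by move: HN; rewrite -natr1 => *; lra.
  have [T0 [Ts [Hiso' HT0 HTs]]] := IH T' HT' HN'.
  exists T1, (T0 :: Ts); split => //.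
    exact: (tri_iso_trans Hiso (tri_iso_tsum T1 Hiso')).
  exact: List.Forall_cons.
Qed.

Lemma rk_bound X Y (f : Defs.Hom X Y) : exists n : nat, rk f <= n%:R.
Proof.
have [z Hz] := rk_int f; exists `|z|%N.
by rewrite Hz natr_absz ler_int; exact: ler_norm.
Qed.

Lemma Nt_bound T : exists n : nat, Nt T <= n%:R.
Proof.
have [n1 H1] := rk_bound (idm (tX T)); have [n2 H2] := rk_bound (idm (tY T)).
have [n3 H3] := rk_bound (idm (tZ T)).
exists (n1 + n2 + n3)%N; rewrite /Nt !natrD; lra.
Qed.

Lemma tri_sub_sum (P : Obj C -> Prop) A B : tri_subcat P -> P A -> P B -> P (bs A B).
Proof.
move=> [H0 Hiso HS Hcone] HA HB.
have [Z [q [k HT]]] := TR1_ext (Defs.bin1 : Defs.Hom A (bs A B)).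
have [Hk [j [Hqj Hpj Hqi Hsum]]] := cone_split HT (bp1_in1 A B).
have Ejq : j ⊚ q = idm (bs A B) - Defs.bin1 ⊚ bp1 by rewrite -Hsum addrAC subrr add0r.
have Ebb : Defs.bin2 ⊚ bp2 = idm (bs A B) - Defs.bin1 ⊚ bp1
  by rewrite -(bs_id A B) addrAC subrr add0r.
have HZ : P Z.
  apply: (Hiso _ _ (q ⊚ Defs.bin2)) HB; exists (bp2 ⊚ j); split.
    rewrite comp_assoc (compA' j) Ejq compBl comp_id_l compBr bp2_in2.
    by rewrite comp_assoc bp1_in2 !comp0r subr0.
  rewrite comp_assoc (compA' Defs.bin2) Ebb compBl comp_id_l compBr Hqj.
  by rewrite comp_assoc Hpj !comp0r subr0.
have HSA := (HS A).1 HA.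
have H := Hcone _ (dist_rot (dist_rot HT)) HZ HSA.
exact: (HS _).2 H.
Qed.

Lemma tri_sub_orbit (P : Obj C -> Prop) G W : tri_subcat P -> P G -> orbit G W -> P W.
Proof.
move=> [H0 Hiso HS Hcone] HG HW; apply: (HW P).
- exact: HG.
- move=> W1 W2 f Hf HW1; exact: (Hiso _ _ f Hf HW1).
- move=> W1 H; exact: (HS W1).1 H.
- move=> W1 H; exact: (HS W1).2 H.
Qed.

Lemma gen_all G (HG : thick_generator G) (HG1 : rk (idm G) = 1) (P : Obj C -> Prop) :
  tri_subcat P -> P G -> forall (n : nat) Y, rk (idm Y) <= n%:R -> P Y.
Proof.
move=> HP HPG.
have Pzero Y : is_zero Y -> P Y.
  move=> HYz; case: HP => H0 Hiso _ _; apply: (Hiso _ _ (0 : Defs.Hom zo Y)) H0.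
  exact: iso_zero (zo_z C) HYz.
elim => [|n IH] Y HY; (have [HYz|HYz] := classic (is_zero Y); first exact: Pzero);
  have [G' [HG' [s Hs]]] := nz_from_gen HG HYz; have HS := orbit_rk1 HG1 HG';
  have [r Hr] := rank1_mono HS Hs;
  have [Y' [j [q Hd]]] := dec_exists Hr;
  have E := rk_dec Hd; have := rk_ge0 (idm Y').
- move=> *; exfalso; lra.
- move=> H0.
  have HY' : rk (idm Y') <= n%:R by move: HY; rewrite -natr1 => *; lra.
  have HPY' := IH Y' HY'.
  have HPs := tri_sub_sum HP (tri_sub_orbit HP HPG HG') HPY'.
  case: HP => _ Hiso _ _; apply: (Hiso _ _ (s ⊚ bp1 + j ⊚ bp2)) HPs.
  case: Hd => D1 D2 D3 D4 D5; have [E1 E2] := decomp_iso D1 D2 D3 D4 D5.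
  by exists (Defs.bin1 ⊚ r + Defs.bin2 ⊚ q).
Qed.

Lemma simple_main : simple_tricat C.
Proof.
case: Hpr => _ [G [HG HG1]].
have HGnz : ~ is_zero G.
  by move=> Hz; move: HG1; rewrite (rk_id_zero Hz) => E; exfalso; lra.
split.
  move=> T HT; have [n Hn] := Nt_bound T.
  exact: (split_good HG HG1 (dist_good HT) Hn).
exists G; split => //; split.
  split => // A B f Hf.
  have E := rk_id_iso Hf; rewrite rk_id_bs HG1 in E.
  have [HA|HA] := classic (is_zero A); first by left.
  have [HB|HB] := classic (is_zero B); first by right.
  have HA1 : idm A != 0 by apply/eqP.
  have HB1 : idm B != 0 by apply/eqP.
  have := rk_ge1 HA1; have := rk_ge1 HB1 => *; exfalso; lra.
move=> P HP HPG Y; have [n Hn] := rk_bound (idm Y).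
exact: (gen_all HG HG1 HP HPG Hn).
Qed.
End Rank.

Unset Implicit Arguments.

Theorem proposition2p23 (C : TriCat) (rho : forall X Y : Obj C, Defs.Hom X Y -> Rdefinitions.R) :
  rank_function rho -> morphism_faithful rho -> prime_rank rho ->
  simple_tricat C.
Proof.
move=> H1 H2 H3; exact: (simple_main H1 H2 H3).
Qed.
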